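(* Let $(\mathfrak S_A,\mathfrak E_A,\epsilon^{\mathfrak S_A})$ and $(\mathfrak S_B,\mathfrak E_B,\epsilon^{\mathfrak S_B})$ be States/Effects Chu spaces, $\Phi\in\mathfrak S_A\widetilde{\otimes}\mathfrak S_B$ and $\mathfrak l_A\in\mathfrak E_A$ with $\Phi(\mathfrak l_A,\mathfrak Y_{\mathfrak E_B})=\bot$. Then for all $\mathfrak l_B,\mathfrak l'_B\in\mathfrak E_B$ with $\mathfrak l_B\sqcap\mathfrak l'_B=\bot_{\mathfrak E_B}$, $$(\Phi(\mathfrak l_A,\mathfrak l_B),\Phi(\mathfrak l_A,\mathfrak l'_B))\in\{(\bot,N),(N,\bot),(\bot,\bot)\}.$$
   Context: The boolean domain is $\mathfrak{B}=\{Y,N,\bot\}$, ordered by $u\le v$ iff $u=\bot$ or $u=v$; nonempty infima $\bigwedge$: $Y$ (resp. $N$) if all members are $Y$ (resp. $N$), else $\bot$. Product $\bullet$: $x\bullet Y=x$, $x\bullet N=N$, $\bot\bullet\bot=\bot$ (commutative); involution $\overline{\bot}=\bot$, $\overline{Y}=N$, $\overline{N}=Y$. A space of states is a poset $(\mathfrak S,\sqsubseteq)$ with bottom $\bot_{\mathfrak S}$ in which every nonempty subset has an infimum. The natural space of effects $\mathfrak E_{\mathfrak S}$ consists of formal symbols $\mathfrak l_{(\sigma,\sigma')}$ ($\sigma,\sigma'$ with no common upper bound), $\mathfrak l_{(\sigma,\cdot)}$, $\mathfrak l_{(\cdot,\sigma)}$, $\mathfrak l_{(\cdot,\cdot)}$,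 with evaluation $\epsilon_{\mathfrak l_{(a,b)}}(\sigma)=Y$ if $a\sqsubseteq\sigma$, $N$ if $b\sqsubseteq\sigma$, $\bot$ otherwise (''$\cdot\sqsubseteq\sigma$'' false), ordered by pointwise comparison of evaluations (nonempty infima exist and are pointwise). $\overline{\mathfrak l_{(a,b)}}=\mathfrak l_{(b,a)}$, $\mathfrak Y_{\mathfrak E}=\mathfrak l_{(\bot_{\mathfrak S},\cdot)}$, $\bot_{\mathfrak E}=\mathfrak l_{(\cdot,\cdot)}$ (constantly $\bot$). A States/Effects Chu space $(\mathfrak S,\mathfrak E,\epsilon)$: $\mathfrak E\subseteq\mathfrak E_{\mathfrak S}$ (induced order) such that (i) each $\sigma\ne\bot_{\mathfrak S}$ has some $\sigma'\ne\bot_{\mathfrak S}$ with $\mathfrak l_{(\sigma,\sigma')}\in\mathfrak E$; (ii) $\mathfrak E$ is closed under nonempty infima of $\mathfrak E_{\mathfrak S}$; (iii) closed under bar; (iv) contains $\mathfrak Y_{\mathfrak E},\bot_{\mathfrak E}$. The pure tensor $\sigma_A\widetilde{\otimes}\sigma_B$ is the map $\mathfrak E_A\times\mathfrak E_B\to\mathfrak B$, $(\mathfrak l_A,\mathfrak l_B)\mapsto\epsilon^{\mathfrak S_A}_{\mathfrak l_A}(\sigma_A)\bullet\epsilon^{\mathfrak S_B}_{\mathfrak l_B}(\sigma_B)$; the minimal tensor product $\mathfrak S_A\widetilde{\otimes}\mathfrak S_B$ is the set of pointwise infima of nonempty families of pure tensors. *)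

(* Defs.v *)
From Stdlib Require Import ClassicalEpsilon.

Inductive B3 : Type := BY | BN | Bbot.

Definition ble (u v : B3) : Prop := u = Bbot \/ u = v.

Definition bprod (x y : B3) : B3 :=
  match x, y with
  | BY, y => y
  | BN, _ => BN
  | Bbot, BY => Bbot
  | Bbot, BN => BN
  | Bbot, Bbot => Bbot
  end.

Definition is_inf_in {T : Type} (D : T -> Prop) (le : T -> T -> Prop)
  (P : T -> Prop) (m : T) : Prop :=
  D m /\ (forall x, P x -> le m x) /\
  (forall y, D y -> (forall x, P x -> le y x) -> le y m).

Record StateSpace : Type := {
  st :> Type;
  sle : st -> st -> Prop;
  sle_refl : forall x, sle x x;
  sle_trans : forall x y z, sle x y -> sle y z -> sle x z;
  sle_antisym : forall x y, sle x y -> sle y x -> x = y;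
  sbot : st;
  sbot_least : forall x, sle sbot x;
  sinf_exists : forall P : st -> Prop, (exists x, P x) ->
      exists m, is_inf_in (fun _ => True) sle P m
}.
Arguments sle {s}.
Arguments sbot {s}.

(** Formal effect symbols l_(a,b): a, b : option S (None = "."). *)
Definition Eff (S : StateSpace) : Type := (option S * option S)%type.

Definition valid_eff {S : StateSpace} (e : Eff S) : Prop :=
  forall a b, e = (Some a, Some b) -> ~ (exists c, sle a c /\ sle b c).

Definition holds {S : StateSpace} (o : option S) (s : S) : bool :=
  match o with
  | Some x => if excluded_middle_informative (sle x s) then true else false
  | None => false
  end.

Definition ev {S : StateSpace} (e : Eff S) (s : S) : B3 :=
  if holds (fst e) s then BY else if holds (snd e) s then BN else Bbot.

Definition effle {S : StateSpace} (e1 e2 : Eff S) : Prop :=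
  forall s, ble (ev e1 s) (ev e2 s).

Definition ebar {S : StateSpace} (e : Eff S) : Eff S := (snd e, fst e).
Definition effY (S : StateSpace) : Eff S := (Some sbot, None).
Definition effBot (S : StateSpace) : Eff S := (None, None).

Record Chu (S : StateSpace) : Type := {
  eff : Eff S -> Prop;
  eff_valid : forall e, eff e -> valid_eff e;
  chu_i : forall s : S, s <> sbot ->
      exists s' : S, s' <> sbot /\ eff (Some s, Some s');
  chu_ii : forall F : Eff S -> Prop, (forall e, F e -> eff e) ->
      (exists e, F e) ->
      forall m, is_inf_in valid_eff effle F m -> eff m;
  chu_iii : forall e, eff e -> eff (ebar e);
  chu_iv : eff (effY S) /\ eff (effBot S)
}.
Arguments eff {S} c _.

(** Phi belongs to the minimal tensor product: on E_A x E_B it is the pointwise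
    infimum of a nonempty family of pure tensors sa (x) sb, the family being
    given by the set P of pairs (sa, sb). *)
Definition in_min_tensor {SA SB : StateSpace} (CA : Chu SA) (CB : Chu SB)
  (Phi : Eff SA -> Eff SB -> B3) : Prop :=
  exists P : SA -> SB -> Prop, (exists sa sb, P sa sb) /\
    forall la lb, eff CA la -> eff CB lb ->
      is_inf_in (fun _ => True) ble
        (fun v => exists sa sb, P sa sb /\ v = bprod (ev la sa) (ev lb sb))
        (Phi la lb).

(* Main.v *)
Require Import Defs.
From Stdlib Require Import Classical ClassicalEpsilon.

Lemma holds_Some {S : StateSpace} (x s : S) : holds (Some x) s = true <-> sle x s.
Proof. simpl. destruct (excluded_middle_informative (sle x s)); split; congruence || tauto. Qed.

Lemma meet_opt {S : StateSpace} (o1 o2 : option S) :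
  exists o : option S, forall s, holds o s = (holds o1 s && holds o2 s)%bool.
Proof.
  destruct o1 as [x|]; [|exists None; intros; reflexivity].
  destruct o2 as [y|]; [|exists None; intros s; destruct (holds (Some x) s); reflexivity].
  destruct (classic (exists u, sle x u /\ sle y u)) as [[u [Hxu Hyu]]|Hn].
  - destruct (sinf_exists S (fun z => sle x z /\ sle y z)) as [c [_ [Hlb Hgr]]].
    { exists u; auto. }
    exists (Some c). intros s.
    assert (Hxc : sle x c) by (apply Hgr; auto; intros z [? ?]; auto).
    assert (Hyc : sle y c) by (apply Hgr; auto; intros z [? ?]; auto).
    destruct (holds (Some c) s) eqn:E.
    + apply holds_Some in E.
      assert (h1 : holds (Some x) s = true) by (apply holds_Some; eapply sle_trans; eauto).
      assert (h2 : holds (Some y) s = true) by (apply holds_Some; eapply sle_trans; eauto).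
      rewrite h1, h2; reflexivity.
    + destruct (holds (Some x) s) eqn:E1; destruct (holds (Some y) s) eqn:E2; try reflexivity.
      apply holds_Some in E1; apply holds_Some in E2.
      assert (sle c s) by (apply Hlb; auto).
      apply holds_Some in H; congruence.
  - exists None. intros s. simpl holds at 1.
    destruct (holds (Some x) s) eqn:E1; destruct (holds (Some y) s) eqn:E2; try reflexivity.
    apply holds_Some in E1; apply holds_Some in E2. exfalso; eauto.
Qed.

Lemma valid_holds {S : StateSpace} (e : Eff S) s :
  valid_eff e -> holds (fst e) s = true -> holds (snd e) s = true -> False.
Proof.
  intros Hv H1 H2. destruct e as [[a|] [b|]]; simpl in H1, H2; try discriminate.
  apply holds_Some in H1; apply holds_Some in H2.
  eapply Hv; eauto.
Qed.

Lemma key {S : StateSpace} (C : Chu S) (lb lb' : Eff S) sb :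
  eff C lb -> eff C lb' ->
  is_inf_in (eff C) effle (fun e => e = lb \/ e = lb') (effBot S) ->
  ev lb sb = BN -> ev lb' sb = BN -> False.
Proof.
  intros Hl Hl' [_ [_ Hgr]] E E'.
  pose proof (eff_valid _ C _ Hl) as V. pose proof (eff_valid _ C _ Hl') as V'.
  destruct lb as [a b], lb' as [a' b'].
  destruct (meet_opt a a') as [ya Hya]. destruct (meet_opt b b') as [yb Hyb].
  assert (Vm : valid_eff (ya, yb)).
  { intros x y Heq [d [Hxd Hyd]]. inversion Heq; subst.
    assert (h1 : holds (Some x) d = true) by (apply holds_Some; auto).
    assert (h2 : holds (Some y) d = true) by (apply holds_Some; auto).
    rewrite Hya in h1. rewrite Hyb in h2.
    apply Bool.andb_true_iff in h1; apply Bool.andb_true_iff in h2.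
    apply (valid_holds (a,b) d V); simpl; tauto. }
  assert (Hinf : is_inf_in valid_eff effle (fun e => e = (a,b) \/ e = (a',b')) (ya, yb)).
  { split; [exact Vm|split].
    - intros x [-> | ->]; intros s; unfold ev; simpl; rewrite Hya, Hyb;
      pose proof (valid_holds _ s V) as W; pose proof (valid_holds _ s V') as W';
      simpl in W, W';
      destruct (holds a s), (holds a' s), (holds b s), (holds b' s); simpl;
      unfold ble; try tauto; exfalso; auto.
    - intros y _ Hy s.
      pose proof (Hy _ (or_introl eq_refl) s) as H1.
      pose proof (Hy _ (or_intror eq_refl) s) as H2.
      unfold ble in *. unfold ev in *; simpl in *; rewrite Hya, Hyb.
      pose proof (valid_holds _ s V) as W; pose proof (valid_holds _ s V') as W';
      simpl in W, W'.
      destruct (if holds (fst y) s then BY else if holds (snd y) s then BN else Bbot);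
      [|  | left; reflexivity];
      destruct (holds a s), (holds a' s), (holds b s), (holds b' s); simpl in *;
      intuition discriminate. }
  assert (Hm : eff C (ya, yb)).
  { refine (chu_ii S C _ _ _ _ Hinf).
    - intros e [-> | ->]; auto.
    - exists (a,b); left; reflexivity. }
  assert (Hle := Hgr _ Hm (fun x Hx => proj1 (proj2 Hinf) x Hx) sb).
  unfold ev in Hle, E, E'; simpl in *. rewrite Hya, Hyb in Hle.
  destruct (holds a sb), (holds a' sb), (holds b sb), (holds b' sb); simpl in *;
    try discriminate; unfold ble in Hle; intuition discriminate.
Qed.

Lemma bprod_Y x : bprod x BY = x.
Proof. destruct x; reflexivity. Qed.

Lemma bprod_YY x y : bprod x y = BY -> x = BY.
Proof. destruct x, y; simpl; congruence. Qed.

Lemma ev_effY {S : StateSpace} (s : S) : ev (effY S) s = BY.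
Proof. unfold ev; simpl. destruct (excluded_middle_informative (sle sbot s)); auto.
  exfalso; apply n, sbot_least. Qed.

Theorem mainTheorem20 (SA SB : StateSpace) (CA : Chu SA) (CB : Chu SB)
  (Phi : Eff SA -> Eff SB -> B3) (la : Eff SA) :
  in_min_tensor CA CB Phi -> eff CA la ->
  Phi la (effY SB) = Bbot ->
  forall lb lb' : Eff SB, eff CB lb -> eff CB lb' ->
    is_inf_in (eff CB) effle (fun e => e = lb \/ e = lb') (effBot SB) ->
    (Phi la lb = Bbot /\ Phi la lb' = BN) \/
    (Phi la lb = BN /\ Phi la lb' = Bbot) \/
    (Phi la lb = Bbot /\ Phi la lb' = Bbot).
Proof.
  intros [P [Pne H]] Hla HY lb lb' Hlb Hlb' Hinf.
  pose proof (H la (effY SB) Hla (proj1 (chu_iv _ CB))) as [_ [_ GY]].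
  rewrite HY in GY.
  assert (NY : ~ (forall sa sb, P sa sb -> ev la sa = BY)).
  { intros A. destruct (GY BY I) as [d|d]; try discriminate.
    intros v [sa [sb [Hp ->]]]. rewrite ev_effY, bprod_Y, (A _ _ Hp). right; reflexivity. }
  assert (NN : ~ (forall sa sb, P sa sb -> ev la sa = BN)).
  { intros A. destruct (GY BN I) as [d|d]; try discriminate.
    intros v [sa [sb [Hp ->]]]. rewrite ev_effY, bprod_Y, (A _ _ Hp). right; reflexivity. }
  pose proof (H la lb Hla Hlb) as [_ [L1 _]].
  pose proof (H la lb' Hla Hlb') as [_ [L2 _]].
  assert (notY : forall lx, (forall x, (exists sa sb, P sa sb /\ x = bprod (ev la sa) (ev lx sb)) -> ble (Phi la lx) x) -> Phi la lx <> BY).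
  { intros lx L E. apply NY. intros sa sb Hp.
    destruct (L _ (ex_intro _ sa (ex_intro _ sb (conj Hp eq_refl)))) as [d|d];
      rewrite E in d; [discriminate|]. apply (bprod_YY _ _ (eq_sym d)). }
  assert (notNN : ~ (Phi la lb = BN /\ Phi la lb' = BN)).
  { intros [E1 E2]. apply NN. intros sa sb Hp.
    destruct (ev la sa) eqn:Ea; auto; exfalso.
    - destruct (L1 _ (ex_intro _ sa (ex_intro _ sb (conj Hp eq_refl)))) as [d|d];
        rewrite E1 in d; [discriminate|].
      destruct (L2 _ (ex_intro _ sa (ex_intro _ sb (conj Hp eq_refl)))) as [d'|d'];
        rewrite E2 in d'; [discriminate|].
      rewrite Ea in d, d'; simpl in d, d'.
      apply (key CB lb lb' sb Hlb Hlb' Hinf); auto.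
    - destruct (L1 _ (ex_intro _ sa (ex_intro _ sb (conj Hp eq_refl)))) as [d|d];
        rewrite E1 in d; [discriminate|].
      destruct (L2 _ (ex_intro _ sa (ex_intro _ sb (conj Hp eq_refl)))) as [d'|d'];
        rewrite E2 in d'; [discriminate|].
      rewrite Ea in d, d'; simpl in d, d'.
      apply (key CB lb lb' sb Hlb Hlb' Hinf);
        [destruct (ev lb sb) | destruct (ev lb' sb)]; simpl in *; congruence. }
  pose proof (notY lb L1). pose proof (notY lb' L2).
  destruct (Phi la lb), (Phi la lb'); tauto.
Qed.
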